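(* Under the standing assumptions, there exist constants $\mathcal B^L_\Omega>0$ and $\mathcal B^P_\Omega>0$ such that for all $L,L'\in\Omega$ with $\|L'-L\|\le\mathcal B^L_\Omega$, one has $\|P_{L'}^*-P_L^*\|\le\mathcal B^P_\Omega\|L'-L\|$.
   Context: Zero-sum LQ game: $A\in\mathbb R^{d\times d}$, $B\in\mathbb R^{d\times m_1}$, $C\in\mathbb R^{d\times m_2}$, symmetric positive definite $Q,R^u,R^v$; $\Sigma_0=\mathbb E[x_0x_0^\top]\succ0$. For $L$ with $Q-L^\top R^vL\succ0$, $P_L^*\succ0$ is the solution of the inner Riccati equation $P=Q-L^\top R^vL+(A-CL)^\top P(A-CL)-(A-CL)^\top PB(R^u+B^\top PB)^{-1}B^\top P(A-CL)$ for which $A-CL-BK(L)$, $K(L)=(R^u+B^\top P_L^*B)^{-1}B^\top P_L^*(A-CL)$, has spectral radius $<1$. Assumption: the GARE $P=A^\top PA+Q-[A^\top PB\ \ A^\top PC]\begin{bmatrix}R^u+B^\top PB & B^\top PC\\ C^\top PB & -R^v+C^\top PC\end{bmatrix}^{-1}\begin{bmatrix}B^\top PA\\ C^\top PA\end{bmatrix}$ has (i) a minimal positive definite solution $P^*$ with $R^v-C^\top P^*C\succ0$; (ii) $Q-(L^* )^\top R^vL^*\succ0$ where $L^*=[-R^v+C^\top P^*C-C^\top P^*B(R^u+B^\top P^*B)^{-1}B^\top P^*C]^{-1}[C^\top P^*A-C^\top P^*B(R^u+B^\top P^*B)^{-1}B^\top P^*A]$. $0<\zeta<\sigma_{\min}(Q-(L^*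 )^\top R^vL^* )$, $\Omega=\{L:Q-L^\top R^vL\succeq\zeta I\}$. $\|\cdot\|$ is the spectral norm. *)

(* Defs.v *)
From Stdlib Require Import Reals Lra.
From Stdlib Require Import Classical ClassicalEpsilon FunctionalExtensionality.
From HB Require Import structures.
From mathcomp Require Import all_boot all_order all_algebra.
Set Implicit Arguments. Unset Strict Implicit. Unset Printing Implicit Defensive.
Import GRing.Theory.

Definition Req_bool (x y : R) : bool := if Req_EM_T x y then true else false.
Lemma Req_boolP : Equality.axiom Req_bool.
Proof. move=> x y; rewrite /Req_bool; case: Req_EM_T => h; constructor => //. Qed.
HB.instance Definition _ := hasDecEq.Build R Req_boolP.

Definition Rfind (P : pred R) (n : nat) : option R :=
  match excluded_middle_informative (exists x, P x) with
  | left h => Some (proj1_sig (constructive_indefinite_description _ h))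
  | right _ => None
  end.
Lemma Rfind_correct P n x : Rfind P n = Some x -> P x.
Proof.
rewrite /Rfind; case: excluded_middle_informative => // h [<-].
exact: (proj2_sig (constructive_indefinite_description _ h)).
Qed.
Lemma Rfind_complete (P : pred R) : (exists x, P x) -> exists n, Rfind P n.
Proof. move=> h; exists 0%N; rewrite /Rfind; case: excluded_middle_informative => //. Qed.
Lemma Rfind_ext (P Q : pred R) : P =1 Q -> Rfind P =1 Rfind Q.
Proof. move=> /functional_extensionality ->; done. Qed.
HB.instance Definition _ := hasChoice.Build R Rfind_correct Rfind_complete Rfind_ext.

Lemma R_addrA : associative Rplus. Proof. move=> *; ring. Qed.
Lemma R_addrC : commutative Rplus. Proof. move=> *; ring. Qed.
Lemma R_add0r : left_id R0 Rplus. Proof. move=> *; ring. Qed.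
Lemma R_addNr : left_inverse R0 Ropp Rplus. Proof. move=> *; ring. Qed.
HB.instance Definition _ := GRing.isZmodule.Build R R_addrA R_addrC R_add0r R_addNr.

Lemma R_mulrA : associative Rmult. Proof. move=> *; ring. Qed.
Lemma R_mulrC : commutative Rmult. Proof. move=> *; ring. Qed.
Lemma R_mul1r : left_id R1 Rmult. Proof. move=> *; ring. Qed.
Lemma R_mulrDl : left_distributive Rmult Rplus. Proof. move=> *; ring. Qed.
Lemma R_oner_neq0 : R1 != R0.
Proof. apply/eqP; exact: R1_neq_R0. Qed.
HB.instance Definition _ := GRing.Zmodule_isComNzRing.Build R
  R_mulrA R_mulrC R_mul1r R_mulrDl R_oner_neq0.

Lemma R_mulVf (x : R) : x != 0%R -> Rmult (Rinv x) x = R1.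
Proof. move=> /eqP h; apply: Rinv_l; exact: h. Qed.
HB.instance Definition _ := GRing.ComNzRing_isField.Build R R_mulVf Rinv_0.

Local Open Scope ring_scope.

Definition posdef (n : nat) (M : 'M[R]_n) : Prop :=
  M^T = M /\ forall x : 'cV[R]_n, x <> 0 -> Rlt R0 ((x^T *m M *m x) ord0 ord0).

Definition psd (n : nat) (M : 'M[R]_n) : Prop :=
  M^T = M /\ forall x : 'cV[R]_n, Rle R0 ((x^T *m M *m x) ord0 ord0).

Definition vnorm (n : nat) (x : 'cV[R]_n) : R :=
  sqrt (\sum_(i < n) x i ord0 ^+ 2).

(* spectral norm = operator norm induced by the Euclidean norm:
   ‖M‖ = sup { |M x| : |x| = 1 }  (0 is included to cover n = 0) *)
Definition spec_norm (m n : nat) (M : 'M[R]_(m, n)) : R :=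
  epsilon (inhabits R0)
    (is_lub (fun r => r = R0 \/ exists x : 'cV[R]_n, vnorm x = R1 /\ r = vnorm (M *m x))).

Definition is_glb (E : R -> Prop) (m : R) : Prop :=
  (forall x, E x -> Rle m x) /\ (forall b, (forall x, E x -> Rle b x) -> Rle b m).

Definition sigma_min (n : nat) (M : 'M[R]_n) : R :=
  epsilon (inhabits R0)
    (is_glb (fun r => exists x : 'cV[R]_n, vnorm x = R1 /\ r = vnorm (M *m x))).

(* a + i b is a (complex) eigenvalue of the real matrix M :
   there is a nonzero complex vector u + i v with M (u + i v) = (a + i b)(u + i v) *)
Definition is_eigenvalue (n : nat) (M : 'M[R]_n) (a b : R) : Prop :=
  exists u v : 'cV[R]_n, (u <> 0 \/ v <> 0) /\
    M *m u = a *: u - b *: v /\ M *m v = b *: u + a *: v.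

(* spectral radius = max modulus of the (complex) eigenvalues (0 if n = 0) *)
Definition spec_rad (n : nat) (M : 'M[R]_n) : R :=
  epsilon (inhabits R0)
    (is_lub (fun r => r = R0 \/
       exists a b, is_eigenvalue M a b /\ r = sqrt (Rplus (Rmult a a) (Rmult b b)))).

Definition inner_riccati_rhs (d m1 m2 : nat) (A : 'M[R]_d) (B : 'M[R]_(d, m1))
    (C : 'M[R]_(d, m2)) (Q : 'M[R]_d) (Ru : 'M[R]_m1) (Rv : 'M[R]_m2)
    (L : 'M[R]_(m2, d)) (P : 'M[R]_d) : 'M[R]_d :=
  let Acl := A - C *m L in
  Q - L^T *m Rv *m L + Acl^T *m P *m Acl
    - Acl^T *m P *m B *m invmx (Ru + B^T *m P *m B) *m B^T *m P *m Acl.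

Definition K_of (d m1 m2 : nat) (A : 'M[R]_d) (B : 'M[R]_(d, m1))
    (C : 'M[R]_(d, m2)) (Ru : 'M[R]_m1)
    (L : 'M[R]_(m2, d)) (P : 'M[R]_d) : 'M[R]_(m1, d) :=
  invmx (Ru + B^T *m P *m B) *m B^T *m P *m (A - C *m L).

Definition is_Pstar (d m1 m2 : nat) (A : 'M[R]_d) (B : 'M[R]_(d, m1))
    (C : 'M[R]_(d, m2)) (Q : 'M[R]_d) (Ru : 'M[R]_m1) (Rv : 'M[R]_m2)
    (L : 'M[R]_(m2, d)) (P : 'M[R]_d) : Prop :=
  posdef P /\ P = inner_riccati_rhs A B C Q Ru Rv L P /\
  Rlt (spec_rad (A - C *m L - B *m K_of A B C Ru L P)) R1.

Definition gare_mid (d m1 m2 : nat) (B : 'M[R]_(d, m1)) (C : 'M[R]_(d, m2))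
    (Ru : 'M[R]_m1) (Rv : 'M[R]_m2) (P : 'M[R]_d) : 'M[R]_(m1 + m2) :=
  block_mx (Ru + B^T *m P *m B) (B^T *m P *m C)
           (C^T *m P *m B) (- Rv + C^T *m P *m C).

Definition solves_GARE (d m1 m2 : nat) (A : 'M[R]_d) (B : 'M[R]_(d, m1))
    (C : 'M[R]_(d, m2)) (Q : 'M[R]_d) (Ru : 'M[R]_m1) (Rv : 'M[R]_m2)
    (P : 'M[R]_d) : Prop :=
  gare_mid B C Ru Rv P \in unitmx /\
  P = A^T *m P *m A + Q
      - row_mx (A^T *m P *m B) (A^T *m P *m C)
        *m invmx (gare_mid B C Ru Rv P)
        *m col_mx (B^T *m P *m A) (C^T *m P *m A).

Definition minimal_pd_GARE_sol (d m1 m2 : nat) (A : 'M[R]_d) (B : 'M[R]_(d, m1))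
    (C : 'M[R]_(d, m2)) (Q : 'M[R]_d) (Ru : 'M[R]_m1) (Rv : 'M[R]_m2)
    (P : 'M[R]_d) : Prop :=
  posdef P /\ solves_GARE A B C Q Ru Rv P /\
  forall P' : 'M[R]_d, posdef P' -> solves_GARE A B C Q Ru Rv P' -> psd (P' - P).

Definition Lstar (d m1 m2 : nat) (A : 'M[R]_d) (B : 'M[R]_(d, m1))
    (C : 'M[R]_(d, m2)) (Ru : 'M[R]_m1) (Rv : 'M[R]_m2)
    (P : 'M[R]_d) : 'M[R]_(m2, d) :=
  let G := invmx (Ru + B^T *m P *m B) in
  invmx (- Rv + C^T *m P *m C - C^T *m P *m B *m G *m B^T *m P *m C)
  *m (C^T *m P *m A - C^T *m P *m B *m G *m B^T *m P *m A).

Definition in_Omega (d m2 : nat) (Q : 'M[R]_d) (Rv : 'M[R]_m2) (zeta : R)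
    (L : 'M[R]_(m2, d)) : Prop :=
  psd (Q - L^T *m Rv *m L - zeta%:M).

(* Main.v *)
Require Import Defs.
From Stdlib Require Import Reals Lra Classical ClassicalEpsilon FunctionalExtensionality.
From mathcomp Require Import all_boot all_order all_algebra.
Local Open Scope ring_scope.
Import GRing.Theory.
Set Implicit Arguments. Unset Strict Implicit.
Ltac toR := rewrite /GRing.mul /Algebra.add /Algebra.opp /Algebra.zero /GRing.one /=.

Definition dot n (u v : 'cV[R]_n) : R := (u^T *m v) ord0 ord0.
Definition bf n (M : 'M[R]_n) (u v : 'cV[R]_n) : R := dot u (M *m v).

Section Basics.
Variable n : nat.
Implicit Types u v w : 'cV[R]_n.
Implicit Types M N : 'M[R]_n.

Lemma dot_sum u v : dot u v = \sum_(i < n) u i ord0 * v i ord0.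
Proof. by rewrite /dot mxE; apply: eq_bigr => i _; rewrite mxE. Qed.
Lemma dot_ge0 u : Rle R0 (dot u u).
Proof. rewrite dot_sum; apply: (big_ind (fun x => Rle R0 x)).
- exact: Rle_refl.
- move=> x y hx hy; exact: Rplus_le_le_0_compat.
- move=> i _; exact: Rle_0_sqr.
Qed.
Lemma dotC u v : dot u v = dot v u.
Proof. by rewrite !dot_sum; apply: eq_bigr => i _; rewrite mulrC. Qed.
Lemma dotDl u v w : dot (u + v) w = Rplus (dot u w) (dot v w).
Proof. by rewrite /dot linearD /= mulmxDl mxE. Qed.
Lemma dotDr u v w : dot w (u + v) = Rplus (dot w u) (dot w v).
Proof. by rewrite /dot mulmxDr mxE. Qed.
Lemma dotNl u v : dot (- u) v = Ropp (dot u v).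
Proof. by rewrite /dot linearN /= mulNmx mxE. Qed.
Lemma dotNr u v : dot u (- v) = Ropp (dot u v).
Proof. by rewrite /dot mulmxN mxE. Qed.
Lemma dotBl u v w : dot (u - v) w = Rminus (dot u w) (dot v w).
Proof. by rewrite dotDl dotNl. Qed.
Lemma dotBr u v w : dot w (u - v) = Rminus (dot w u) (dot w v).
Proof. by rewrite dotDr dotNr. Qed.
Lemma dotZl a u v : dot (a *: u) v = Rmult a (dot u v).
Proof. by rewrite /dot linearZ /= -scalemxAl mxE. Qed.
Lemma dotZr a u v : dot u (a *: v) = Rmult a (dot u v).
Proof. by rewrite /dot -scalemxAr mxE. Qed.
Lemma dot0r u : dot u 0 = R0.
Proof. by rewrite /dot mulmx0 mxE. Qed.
Lemma dot_mul m (M : 'M[R]_(n,m)) u (v : 'cV[R]_m) : dot u (M *m v) = dot (M^T *m u) v.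
Proof. by rewrite /dot trmx_mul trmxK mulmxA. Qed.
Lemma dot0l u : dot 0 u = R0.
Proof. by rewrite dotC dot0r. Qed.

Lemma bfE M u v : bf M u v = (u^T *m M *m v) ord0 ord0.
Proof. by rewrite /bf /dot mulmxA. Qed.
Lemma bfD M N u v : bf (M + N) u v = Rplus (bf M u v) (bf N u v).
Proof. by rewrite /bf mulmxDl dotDr. Qed.
Lemma bfN M u v : bf (- M) u v = Ropp (bf M u v).
Proof. by rewrite /bf mulNmx dotNr. Qed.
Lemma bfB M N u v : bf (M - N) u v = Rminus (bf M u v) (bf N u v).
Proof. by rewrite bfD bfN. Qed.
Lemma bf_scal a u v : bf a%:M u v = Rmult a (dot u v).
Proof. by rewrite /bf mul_scalar_mx dotZr. Qed.
Lemma bf1 u v : bf 1%:M u v = dot u v.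
Proof. by rewrite /bf mul1mx. Qed.
Lemma bfDl M u v w : bf M (u + v) w = Rplus (bf M u w) (bf M v w).
Proof. by rewrite /bf dotDl. Qed.
Lemma bfDr M u v w : bf M w (u + v) = Rplus (bf M w u) (bf M w v).
Proof. by rewrite /bf mulmxDr dotDr. Qed.
Lemma bfBl M u v w : bf M (u - v) w = Rminus (bf M u w) (bf M v w).
Proof. by rewrite /bf dotBl. Qed.
Lemma bfBr M u v w : bf M w (u - v) = Rminus (bf M w u) (bf M w v).
Proof. by rewrite /bf mulmxBr dotBr. Qed.
Lemma bfZl M a u v : bf M (a *: u) v = Rmult a (bf M u v).
Proof. by rewrite /bf dotZl. Qed.
Lemma bfZr M a u v : bf M u (a *: v) = Rmult a (bf M u v).
Proof. by rewrite /bf -scalemxAr dotZr. Qed.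
Lemma bf_sym M u v : M^T = M -> bf M u v = bf M v u.
Proof. by move=> hM; rewrite /bf dot_mul hM dotC. Qed.
Lemma bf00 M : bf M 0 0 = R0.
Proof. by rewrite /bf mulmx0 dot0r. Qed.
Lemma qB M u v : M^T = M ->
  bf M (u - v) (u - v) = Rplus (Rminus (bf M u u) (Rmult 2 (bf M u v))) (bf M v v).
Proof.
move=> hM; rewrite !bfBl !bfBr (bf_sym v u hM).
rewrite /Rminus; ring.
Qed.
Lemma qD M u v : M^T = M ->
  bf M (u + v) (u + v) = Rplus (Rplus (bf M u u) (Rmult 2 (bf M u v))) (bf M v v).
Proof.
move=> hM; rewrite !bfDl !bfDr (bf_sym v u hM); ring.
Qed.
End Basics.

Lemma bf_mul k n (N : 'M[R]_(k,n)) (M : 'M[R]_k) (N' : 'M[R]_(k,n)) u v :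
  bf (N^T *m M *m N') u v = bf M (N *m u) (N' *m v).
Proof. by rewrite /bf -!mulmxA dot_mul trmxK. Qed.

Section RealLemmas.
Local Open Scope R_scope.
Lemma CS_real a b c : 0 <= c -> (forall t, 0 <= a - 2 * t * b + t * t * c) -> b * b <= a * c.
Proof.
move=> hc h.
have ha : 0 <= a by have := h 0; lra.
destruct (Rlt_dec 0 c) as [hc'|hc'].
- have := h (b / c). 
  have e : a - 2 * (b / c) * b + b / c * (b / c) * c = a - b * b / c by field; lra.
  rewrite e => h1.
  have : 0 <= (a - b*b/c) * c by apply Rmult_le_pos; lra.
  have e2 : (a - b * b / c) * c = a * c - b * b by field; lra.
  rewrite e2; lra.
- have c0 : c = 0 by lra.
  subst c.
  destruct (Req_dec b 0) as [->|hb]; first lra.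
  have := h ((a + 1) / (2 * b)).
  have e : a - 2 * ((a + 1) / (2 * b)) * b + (a + 1) / (2 * b) * ((a + 1) / (2 * b)) * 0 = -1 by field.
  rewrite e; lra.
Qed.
End RealLemmas.

Definition psdq n (M : 'M[R]_n) := M^T = M /\ forall x, Rle R0 (bf M x x).

Lemma psd_psdq n (M : 'M[R]_n) : psd M -> psdq M.
Proof. by move=> [h1 h2]; split=> // x; rewrite bfE. Qed.
Lemma posdef_psdq n (M : 'M[R]_n) : posdef M -> psdq M.
Proof.
move=> [h1 h2]; split=> // x.
have [->|hx] := eqVneq x 0; first by rewrite bf00; exact: Rle_refl.
apply: Rlt_le; rewrite bfE; apply: h2; exact/eqP.
Qed.

Lemma CS_bf n (M : 'M[R]_n) u v : psdq M ->
  Rle (Rmult (bf M u v) (bf M u v)) (Rmult (bf M u u) (bf M v v)).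
Proof.
move=> [hs hp]; apply: CS_real; first exact: hp.
move=> t; have := hp (u - t *: v).
rewrite qB // !bfZr bfZl.
have -> : Rmult t (Rmult t (bf M v v)) = Rmult (Rmult t t) (bf M v v) by ring.
have -> : Rmult 2 (Rmult t (bf M u v)) = Rmult (Rmult 2 t) (bf M u v) by ring.
done.
Qed.

Lemma dot_psdq n : psdq (1%:M : 'M[R]_n).
Proof. split; first exact: tr_scalar_mx. move=> x; rewrite bf1; exact: dot_ge0. Qed.

Lemma sum_le n (f g : 'I_n -> R) : (forall i, Rle (f i) (g i)) ->
  Rle (\sum_(i < n) f i) (\sum_(i < n) g i).
Proof.
move=> h; apply: (big_ind2 (fun a b => Rle a b)) => //.
- exact: Rle_refl.
- move=> *; exact: Rplus_le_compat.
Qed.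

Lemma mx_bound m n (M : 'M[R]_(m,n)) : exists c, Rle R0 c /\
  forall x, Rle (dot (M *m x) (M *m x)) (Rmult c (dot x x)).
Proof.
exists (\sum_(i < m) dot (row i M)^T (row i M)^T); split.
- apply: (big_ind (fun x => Rle R0 x)); first exact: Rle_refl.
  + move=> *; exact: Rplus_le_le_0_compat.
  + move=> i _; exact: dot_ge0.
- move=> x; rewrite [X in Rle X _]dot_sum.
  have e : forall i, (M *m x) i ord0 = dot (row i M)^T x.
    move=> i; rewrite dot_sum mxE; apply: eq_bigr => j _; by rewrite !mxE.
  have -> : Rmult (\sum_(i < m) dot (row i M)^T (row i M)^T) (dot x x)
     = \sum_(i < m) (dot (row i M)^T (row i M)^T * dot x x) by rewrite -mulr_suml.
  apply: sum_le => i; rewrite e.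
  have := CS_bf (row i M)^T x (@dot_psdq n); rewrite !bf1; done.
Qed.

Lemma vnorm_dot n (x : 'cV[R]_n) : vnorm x = sqrt (dot x x).
Proof. by rewrite /vnorm dot_sum; congr sqrt; apply: eq_bigr => i _; rewrite expr2. Qed.

Definition Eset m n (M : 'M[R]_(m,n)) := (fun r => r = R0 \/ exists x : 'cV[R]_n, vnorm x = R1 /\ r = vnorm (M *m x)).

Section RealLemmas2.
Local Open Scope R_scope.
Lemma sqrt_le_sq a b : 0 <= a -> sqrt a <= b -> a <= b * b.
Proof.
move=> ha hb; have h0 := sqrt_pos a.
rewrite -(sqrt_sqrt a ha); apply: Rmult_le_compat => //.
Qed.
Lemma sqrt1_eq a : 0 <= a -> sqrt a = 1 -> a = 1.
Proof. by move=> ha h; rewrite -(sqrt_sqrt a ha) h; ring. Qed.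
End RealLemmas2.

Lemma vnorm1 n (x : 'cV[R]_n) : vnorm x = R1 -> dot x x = R1.
Proof. rewrite vnorm_dot; apply: sqrt1_eq; exact: dot_ge0. Qed.

Lemma spec_lub m n (M : 'M[R]_(m,n)) : is_lub (Eset M) (spec_norm M).
Proof.
rewrite /spec_norm; apply: epsilon_spec.
have [c [hc0 hc]] := mx_bound M.
have hb : bound (Eset M).
  exists (sqrt c) => r [->|[x [hx ->]]]; first exact: sqrt_pos.
  rewrite vnorm_dot; apply: sqrt_le_1_alt.
  have := hc x; rewrite (vnorm1 hx) Rmult_1_r //.
have [l hl] := @completeness (Eset M) hb (ex_intro _ R0 (or_introl erefl)).
by exists l.
Qed.

Lemma spec_ge0 m n (M : 'M[R]_(m,n)) : Rle R0 (spec_norm M).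
Proof. by apply: (proj1 (spec_lub M)); left. Qed.

Lemma spec_S2 m n (M : 'M[R]_(m,n)) x :
  Rle (dot (M *m x) (M *m x)) (Rmult (Rmult (spec_norm M) (spec_norm M)) (dot x x)).
Proof.
have [c [hc0 hc]] := mx_bound M.
have hz := dot_ge0 (M *m x).
have hs2 := dot_ge0 x.
have hsn := spec_ge0 M.
destruct (Req_dec (dot x x) R0) as [e|ne].
  have := hc x; rewrite e !Rmult_0_r //.
set s2 := dot x x in hs2 ne *.
have hs2' : Rlt R0 s2 by lra.
set s := sqrt s2.
have hs : Rlt R0 s by apply: sqrt_lt_R0.
have ss : Rmult s s = s2 by apply: sqrt_sqrt; lra.
set y := (Rinv s) *: x.
have hy : vnorm y = R1.
  rewrite vnorm_dot /y dotZl dotZr -/s2.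
  have -> : Rmult (Rinv s) (Rmult (Rinv s) s2) = R1 by rewrite -ss; field; lra.
  exact: sqrt_1.
have hE : Rle (vnorm (M *m y)) (spec_norm M).
  apply: (proj1 (spec_lub M)); right; by exists y.
move: hE; rewrite vnorm_dot /y -scalemxAr dotZl dotZr => hE.
have := sqrt_le_sq _ hE.
have h1 : Rle R0 (Rmult (Rinv s) (Rmult (Rinv s) (dot (M *m x) (M *m x)))).
  apply: Rmult_le_pos; first by apply: Rlt_le; apply: Rinv_0_lt_compat.
  apply: Rmult_le_pos => //; by apply: Rlt_le; apply: Rinv_0_lt_compat.
move=> /(_ h1) h2.
have e : dot (M *m x) (M *m x) = Rmult (Rmult s s) (Rmult (Rinv s) (Rmult (Rinv s) (dot (M *m x) (M *m x)))) by field; lra.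
rewrite e -ss.
rewrite -[Rmult (Rmult (spec_norm M) (spec_norm M)) (Rmult s s)]Rmult_comm.
apply: Rmult_le_compat_l => //; apply: Rmult_le_pos; lra.
Qed.

Lemma spec_S3 m n (M : 'M[R]_(m,n)) k : Rle R0 k ->
  (forall x, Rle (dot (M *m x) (M *m x)) (Rmult (Rmult k k) (dot x x))) ->
  Rle (spec_norm M) k.
Proof.
move=> hk h; apply: (proj2 (spec_lub M)) => r [->|[x [hx ->]]] //.
rewrite vnorm_dot -(sqrt_square k hk); apply: sqrt_le_1_alt.
have := h x; rewrite (vnorm1 hx) Rmult_1_r //.
Qed.

Lemma spec_opp m n (M : 'M[R]_(m,n)) : spec_norm (- M) = spec_norm M.
Proof.
have key : forall (A B : 'M[R]_(m,n)), (forall x, vnorm (A *m x) = vnorm (B *m x)) ->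
  Rle (spec_norm A) (spec_norm B).
  move=> A B h; apply: (proj2 (spec_lub A)) => r [->|[x [hx ->]]].
  - exact: spec_ge0.
  - rewrite h; apply: (proj1 (spec_lub B)); right; by exists x.
have hv : forall x, vnorm (- M *m x) = vnorm (M *m x).
  by move=> x; rewrite !vnorm_dot mulNmx dotNl dotNr Ropp_involutive.
apply: Rle_antisym; apply: key => x //; by rewrite hv.
Qed.

Section RealLemmas3.
Local Open Scope R_scope.
Lemma polar_real N X c : 0 <= c -> 0 <= N -> 0 <= X ->
  (forall t, 2 * t * N <= c * X + c * (t * t) * N) -> N <= c * c * X.
Proof.
move=> hc hN hX h.
destruct (Req_dec c 0) as [->|nc].
  have := h 1; lra.
have hc' : 0 < c by lra.
have := h (/ c).
have e1 : 2 * / c * N = (2 * N) / c by field; lra.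
have e2 : c * (/ c * / c) * N = N / c by field; lra.
rewrite e1 e2 => h1.
have h2 : N / c <= c * X by lra.
have : N / c * c <= c * X * c by apply: Rmult_le_compat_r; lra.
have e3 : N / c * c = N by field; lra.
rewrite e3; lra.
Qed.
End RealLemmas3.

Lemma polar n (D : 'M[R]_n) c : D^T = D -> Rle R0 c ->
  (forall y, Rle (Ropp (Rmult c (dot y y))) (bf D y y) /\ Rle (bf D y y) (Rmult c (dot y y))) ->
  forall x, Rle (dot (D *m x) (D *m x)) (Rmult (Rmult c c) (dot x x)).
Proof.
move=> hD hc h x; apply: polar_real => //; try exact: dot_ge0.
move=> t; set z := D *m x.
have h1 := proj2 (h (x + t *: z)).
have h2 := proj1 (h (x - t *: z)).
move: h1 h2; rewrite qD // qB // !bfZr !bfZl ?dotDl ?dotDr ?dotBl ?dotBr ?dotZl ?dotZr ?dotNl ?dotNr ?dotZl ?dotZr.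
have -> : bf D x z = dot z z by rewrite (bf_sym _ _ hD) /bf dotC.
rewrite (dotC z x); move: (dot x x) (dot z z) (dot x z) (bf D x x) (bf D z z) => X N xz qx qz.
move=> h1 h2; nra.
Qed.

Section RealLemmas4.
Local Open Scope R_scope.
Variable T : Type.
Variable F : T -> T.

Lemma iter_mono (g : T -> R) : (forall z, g z <= g (F z)) ->
  forall y t, g y <= g (iter t F y).
Proof.
move=> h y; elim=> [|t IH] /=; first lra.
apply: Rle_trans IH (h _).
Qed.

Lemma decay (qP nn : T -> R) c p : 0 < c -> c <= p ->
  (forall z, qP (F z) <= qP z - c * nn z) -> (forall z, qP z <= p * nn z) ->
  (forall z, 0 <= qP z) -> (forall z, 0 <= nn z) ->
  forall y e, 0 < e -> exists t, nn (iter t F y) <= e.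
Proof.
move=> hc hcp h1 h2 h3 h4 y e he.
set rho := 1 - c / p.
have hp : 0 < p by lra.
have hr0 : 0 <= rho.
  rewrite /rho; have : c / p <= 1.
    apply: (Rmult_le_reg_r p) => //; rewrite Rmult_1_l; field_simplify; lra.
  lra.
have hr1 : rho < 1.
  rewrite /rho; have : 0 < c / p by apply: Rdiv_lt_0_compat.
  lra.
have step : forall z, qP (F z) <= rho * qP z.
  move=> z; have := h1 z; have := h2 z; have := h4 z.
  rewrite /rho => a b c'.
  have : c * nn z >= c / p * qP z.
    have -> : c / p * qP z = c * (qP z / p) by field; lra.
    apply: Rle_ge; apply: Rmult_le_compat_l; first lra.
    apply: (Rmult_le_reg_r p) => //. field_simplify; lra.
  lra.
have it : forall t, qP (iter t F y) <= rho ^ t * qP y.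
  elim=> [|t IH] /=; first lra.
  apply: Rle_trans (step _) _; rewrite Rmult_assoc.
  by apply: Rmult_le_compat_l.
have nq : forall z, nn z <= qP z / c.
  move=> z; have := h1 z; have := h3 (F z) => a b.
  apply: (Rmult_le_reg_r c) => //; field_simplify; lra.
have hq := h3 y.
have [N hN] := pow_lt_1_zero rho (ltac:(rewrite Rabs_pos_eq; lra)) (e * c / (qP y + 1))
   (ltac:(apply: Rdiv_lt_0_compat; [apply: Rmult_lt_0_compat|]; lra)).
exists N.
have := hN N (le_n N); rewrite Rabs_pos_eq; last by apply: pow_le.
move=> hN'.
apply: Rle_trans (nq _) _.
apply: (Rmult_le_reg_r c) => //.
have e1 : qP (iter N F y) / c * c = qP (iter N F y) by field; lra.
rewrite e1; apply: Rle_trans (it N) _.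
have hpow := pow_le rho N hr0.
have : rho ^ N * (qP y + 1) <= e * c.
  have := Rmult_lt_compat_r (qP y + 1) _ _ (ltac:(lra)) hN'.
  have -> : e * c / (qP y + 1) * (qP y + 1) = e * c by field; lra.
  lra.
nra.
Qed.

Lemma limit_arg (nn : T -> R) a b p y : 0 <= p ->
  (forall e, 0 < e -> exists t, nn (iter t F y) <= e) ->
  (forall t, a <= b + p * nn (iter t F y)) -> a <= b.
Proof.
move=> hp hl h.
destruct (Rle_dec a b) as [|hab]; first done.
have [t ht] := hl ((a - b) / (p + 1)) (ltac:(apply: Rdiv_lt_0_compat; lra)).
have := h t.
have : p * nn (iter t F y) <= p * ((a - b) / (p + 1)) by apply: Rmult_le_compat_l.
have : p * ((a - b) / (p + 1)) < a - b.
  apply: (Rmult_lt_reg_r (p + 1)); first lra.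
  field_simplify; lra.
lra.
Qed.
End RealLemmas4.

Lemma posdef_unit n (M : 'M[R]_n) : posdef M -> M \in unitmx.
Proof.
move=> [hs hp]; rewrite unitmxE unitfE; apply/negP => /det0P [v hv0 hv].
have hx : v^T <> 0.
  move=> e; move/eqP: hv0; apply; by rewrite -(trmxK v) e trmx0.
have := hp _ hx; rewrite trmxK hv mul0mx mxE => h; exact: (Rlt_irrefl _ h).
Qed.

Section RealLemmas5.
Local Open Scope R_scope.
Lemma sq_abs x y : 0 <= y -> x * x <= y * y -> Rabs x <= y.
Proof.
move=> hy h; rewrite -(Rabs_pos_eq y hy); apply: Rsqr_le_abs_0; rewrite /Rsqr; lra.
Qed.
Lemma prod_bound z X Y a b de N : 0 <= X -> X <= a * N -> 0 <= Y -> Y <= b * (de * de) * N ->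
  0 <= a -> 0 <= b -> 0 <= de -> 0 <= N -> z * z <= X * Y -> Rabs z <= (a + b) * de * N.
Proof.
move=> hX hXa hY hYb ha hb hd hN hz; apply: sq_abs.
  apply: Rmult_le_pos => //; apply: Rmult_le_pos => //; lra.
apply: Rle_trans hz _.
have h1 : X * Y <= (a * N) * (b * (de * de) * N) by apply: Rmult_le_compat.
apply: Rle_trans h1 _.
have : a * b <= (a + b) * (a + b) by nra.
have hdn : 0 <= (de * N) * (de * N) by nra.
move=> h2.
have e1 : a * N * (b * (de * de) * N) = (a * b) * ((de * N) * (de * N)) by ring.
have e2 : (a + b) * de * N * ((a + b) * de * N) = ((a + b) * (a + b)) * ((de * N) * (de * N)) by ring.
rewrite e1 e2; apply: Rmult_le_compat_r => //.
Qed.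
End RealLemmas5.

Definition c2f (p cC : R) : R := Rplus (Rmult 2 (Rplus p (Rmult p cC))) (Rmult p cC).
Definition c3f (cQ rv p cC : R) : R := Rplus (Rmult 2 (Rplus cQ rv)) (c2f p cC).

Lemma q_bound n (M : 'M[R]_n) : exists c, Rle R0 c /\ forall y, Rle (Rabs (bf M y y)) (Rmult c (dot y y)).
Proof.
have [c0 [hc0 hc]] := mx_bound M.
exists (Rplus 1 c0); split; first lra.
move=> y; apply: sq_abs; first by apply: Rmult_le_pos; [lra|exact: dot_ge0].
have h1 := CS_bf y (M *m y) (@dot_psdq n).
rewrite !bf1 in h1.
have h2 := hc y; have h3 := dot_ge0 y; have h4 := dot_ge0 (M *m y).
rewrite /bf.
apply: Rle_trans h1 _.
have : Rle (Rmult (dot y y) (dot (M *m y) (M *m y))) (Rmult (dot y y) (Rmult c0 (dot y y))).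
  by apply: Rmult_le_compat_l.
nra.
Qed.

Section Game.
Variables (d m1 m2 : nat) (A : 'M[R]_d) (B : 'M[R]_(d, m1)) (C : 'M[R]_(d, m2))
  (Q : 'M[R]_d) (Ru : 'M[R]_m1) (Rv : 'M[R]_m2).

Lemma trH (P : 'M[R]_d) : P^T = P -> Ru^T = Ru -> (Ru + B^T *m P *m B)^T = Ru + B^T *m P *m B.
Proof. by move=> hP hR; rewrite linearD /= !trmx_mul trmxK hP hR mulmxA. Qed.

Lemma riccati_compl (P : 'M[R]_d) (L : 'M[R]_(m2,d)) (K : 'M[R]_(m1,d)) x :
  P^T = P -> Ru^T = Ru -> (Ru + B^T *m P *m B) \in unitmx ->
  let H := Ru + B^T *m P *m B in
  let k0 := K_of A B C Ru L P *m x in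
  Rplus (bf (inner_riccati_rhs A B C Q Ru Rv L P) x x) (bf H (K *m x - k0) (K *m x - k0))
  = Rplus (Rplus (Rminus (bf Q x x) (bf Rv (L *m x) (L *m x))) (bf Ru (K *m x) (K *m x)))
      (bf P ((A - C *m L - B *m K) *m x) ((A - C *m L - B *m K) *m x)).
Proof.
move=> hP hR hU H k0.
set Acl := A - C *m L.
set G := invmx H.
set a := Acl *m x.
set w := B^T *m (P *m a).
set k := K *m x.
have k0E : k0 = G *m w by rewrite /k0 /K_of /w /a !mulmxA.
have Hk0 : H *m k0 = w by rewrite k0E mulmxA mulmxV // mul1mx.
have hH : H^T = H by apply: trH.
have big : bf (Acl^T *m P *m B *m G *m B^T *m P *m Acl) x x = bf H k0 k0.
  rewrite /bf -!mulmxA -/a -/w -k0E.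
  rewrite dot_mul trmxK -/a dot_mul hP dot_mul -/w -Hk0; exact: dotC.
have hk : bf H k k = Rplus (bf Ru k k) (bf P (B *m k) (B *m k)).
  by rewrite bfD bf_mul.
have hkk0 : bf H k k0 = bf P (B *m k) a.
  by rewrite /bf Hk0 /w dot_mul trmxK.
have hcl : (A - C *m L - B *m K) *m x = a - B *m k by rewrite mulmxBl -mulmxA.
have hin : bf (inner_riccati_rhs A B C Q Ru Rv L P) x x =
   Rminus (Rplus (Rminus (bf Q x x) (bf Rv (L *m x) (L *m x))) (bf P a a)) (bf H k0 k0).
  rewrite -big /inner_riccati_rhs -/Acl -/H -/G !bfB !bfD bfN !bf_mul -/a //.
rewrite hcl hin qB // qB // hk hkk0 (bf_sym (B *m k) a hP).
rewrite /Rminus; ring.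
Qed.

Lemma dot_mm k n p (M : 'M[R]_(k,n)) (N : 'M[R]_(n,p)) (u : 'cV[R]_k) (v : 'cV[R]_p) :
  dot u ((M *m N) *m v) = dot u (M *m (N *m v)).
Proof. by rewrite mulmxA. Qed.

Lemma dot_mm' k p (M : 'M[R]_k) (N : 'M[R]_(k,p)) (u : 'cV[R]_k) (v : 'cV[R]_p) :
  dot u ((M *m N) *m v) = bf M u (N *m v).
Proof. by rewrite /bf mulmxA. Qed.

Lemma dotNMN k n1 n2 (N : 'M[R]_(k,n1)) (M : 'M[R]_k) (N' : 'M[R]_(k,n2)) u v :
  dot u (N^T *m M *m N' *m v) = bf M (N *m u) (N' *m v).
Proof. by rewrite /bf -!mulmxA dot_mul trmxK. Qed.
Lemma dotNMNK k n1 n2 p (N : 'M[R]_(k,n1)) (M : 'M[R]_k) (N' : 'M[R]_(k,n2)) (K : 'M[R]_(n2,p)) u v :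
  dot u (N^T *m M *m N' *m K *m v) = bf M (N *m u) (N' *m (K *m v)).
Proof. by rewrite -[_ *m K *m v]mulmxA dotNMN. Qed.

Lemma gare_star (P : 'M[R]_d) : P^T = P -> Rv^T = Rv ->
  solves_GARE A B C Q Ru Rv P -> psdq (Rv - C^T *m P *m C) ->
  exists K : 'M[R]_(m1,d), forall (L : 'M[R]_(m2,d)) x,
   Rle (Rplus (Rplus (Rminus (bf Q x x) (bf Rv (L *m x) (L *m x))) (bf Ru (K *m x) (K *m x)))
        (bf P ((A - B *m K - C *m L) *m x) ((A - B *m K - C *m L) *m x))) (bf P x x).
Proof.
move=> hP hRv [hU hG] hW.
set M := gare_mid B C Ru Rv P in hU hG.
set b := col_mx (B^T *m P *m A) (C^T *m P *m A) in hG.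
set X := invmx M *m b.
have MX : M *m X = b by rewrite /X mulmxA mulmxV // mul1mx.
exists (usubmx X) => L x.
have eX : X = col_mx (usubmx X) (dsubmx X) by rewrite vsubmxK.
set K := usubmx X in eX *; set L0 := dsubmx X in eX *.
move: MX; rewrite eX /M /gare_mid mul_block_col /b => /eq_col_mx [e1 e2].
have hG' : P = A^T *m P *m A + Q - (A^T *m P *m B *m K + A^T *m P *m C *m L0).
  by rewrite {1}hG -[_ *m invmx M *m b]mulmxA -/X eX mul_row_col.
set k := K *m x; set l := L0 *m x; set m := L *m x; set a := A *m x.
have F1 : Rplus (Rplus (bf Ru k k) (bf P (B *m k) (B *m k))) (bf P (B *m k) (C *m l)) = bf P (B *m k) a.
  have := congr1 (fun Y => dot k (Y *m x)) e1.
  rewrite /= mulmxDl dotDr dot_mm' bfD bf_mul dotNMNK dotNMN => h; exact h.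
have F2 : forall y : 'cV[R]_m2, Rplus (bf P (C *m y) (B *m k)) (Rplus (Ropp (bf Rv y l)) (bf P (C *m y) (C *m l))) = bf P (C *m y) a.
  move=> y; have := congr1 (fun Y => dot y (Y *m x)) e2.
  by rewrite /= mulmxDl dotDr dot_mm' bfD bfN bf_mul dotNMNK dotNMN => h; exact h.
have F3 : bf P x x = Rminus (Rminus (Rplus (bf P a a) (bf Q x x)) (bf P a (B *m k))) (bf P a (C *m l)).
  have := congr1 (fun Y => dot x (Y *m x)) hG'.
  rewrite /= mulmxBl !mulmxDl dotBr !dotDr dotNMN !dotNMNK -/(bf Q x x) => h.
  apply: (etrans h); rewrite -/a -/k -/l /Rminus; ring.
have hf : (A - B *m K - C *m L) *m x = ((a : 'cV[R]_d) - (B *m k : 'cV[R]_d) - (C *m m : 'cV[R]_d) : 'cV[R]_d) by rewrite !mulmxBl -!mulmxA.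
have W := proj2 hW (m - l).
rewrite bfB bf_mul mulmxBr qB // qB // in W.
have hs := proj1 hW.
have Fm := F2 m; have Fl := F2 l.
have s1 := bf_sym (B *m k) a hP.
have s2 := bf_sym (C *m m) (B *m k) hP.
have s3 := bf_sym (C *m m) a hP.
have s4 := bf_sym (C *m l) a hP.
have s5 := bf_sym (C *m l) (B *m k) hP.
rewrite hf qB // qB // bfBl F3.
move: W F1 Fm Fl s1 s2 s3 s4 s5.
set t1 := bf P (C *m m) (C *m l). set t2 := bf P (C *m m) (C *m m). set t3 := bf P (C *m l) (C *m l).
set t4 := bf Rv m l. set t5 := bf Rv m m. set t6 := bf Rv l l.
set t7 := bf P (B *m k) a. set t8 := bf P a (B *m k). set t9 := bf P (C *m m) (B *m k).
set t10 := bf P (B *m k) (C *m m). set t11 := bf P (C *m m) a. set t12 := bf P a (C *m m).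
set t13 := bf P (C *m l) a. set t14 := bf P a (C *m l). set t15 := bf P (C *m l) (B *m k).
set t16 := bf P (B *m k) (C *m l). set t17 := bf P (B *m k) (B *m k).
rewrite /Rminus => *; lra.
Qed.

Lemma H_posdef (P : 'M[R]_d) : posdef Ru -> posdef P -> posdef (Ru + B^T *m P *m B).
Proof.
move=> hR hP; have [hPs hPq] := posdef_psdq hP.
split; first by apply: trH => //; case: hR.
move=> x hx; rewrite -bfE bfD bf_mul.
have h1 := proj2 hR x hx; rewrite -bfE in h1.
have h2 := hPq (B *m x).
lra.
Qed.

Lemma omega_q zeta (L : 'M[R]_(m2,d)) : in_Omega Q Rv zeta L ->
  forall z, Rle (Rmult zeta (dot z z)) (Rminus (bf Q z z) (bf Rv (L *m z) (L *m z))).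
Proof.
move=> /psd_psdq [_ h] z; have := h z.
rewrite !bfB bf_mul bf_scal; lra.
Qed.

Lemma pstar_le (L : 'M[R]_(m2,d)) (P : 'M[R]_d) (K : 'M[R]_(m1,d)) z :
  posdef Ru -> is_Pstar A B C Q Ru Rv L P ->
  Rle (bf P z z) (Rplus (Rplus (Rminus (bf Q z z) (bf Rv (L *m z) (L *m z))) (bf Ru (K *m z) (K *m z)))
      (bf P ((A - C *m L - B *m K) *m z) ((A - C *m L - B *m K) *m z))).
Proof.
move=> hR [hP [e _]].
have hH := H_posdef hR hP.
have := @riccati_compl P L K z (proj1 hP) (proj1 hR) (posdef_unit hH).
rewrite /= -e => h1.
have := proj2 (posdef_psdq hH) (K *m z - K_of A B C Ru L P *m z).
lra.
Qed.

Lemma pstar_eq (L : 'M[R]_(m2,d)) (P : 'M[R]_d) z :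
  posdef Ru -> is_Pstar A B C Q Ru Rv L P ->
  let K := K_of A B C Ru L P in
  bf P z z = (Rplus (Rplus (Rminus (bf Q z z) (bf Rv (L *m z) (L *m z))) (bf Ru (K *m z) (K *m z)))
      (bf P ((A - C *m L - B *m K) *m z) ((A - C *m L - B *m K) *m z))).
Proof.
move=> hR [hP [e _]] K.
have hH := H_posdef hR hP.
have := @riccati_compl P L K z (proj1 hP) (proj1 hR) (posdef_unit hH).
rewrite /= -e => <-.
by rewrite /K subrr bf00 Rplus_0_r.
Qed.

Lemma P_le_Pstar (Pst : 'M[R]_d) (Kst : 'M[R]_(m1,d)) zeta p (L : 'M[R]_(m2,d)) (P : 'M[R]_d) :
  Rlt R0 zeta -> Rle zeta p -> posdef Ru -> psdq Pst ->
  (forall z, Rle (bf Pst z z) (Rmult p (dot z z))) ->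
  (forall (L : 'M[R]_(m2,d)) x,
   Rle (Rplus (Rplus (Rminus (bf Q x x) (bf Rv (L *m x) (L *m x))) (bf Ru (Kst *m x) (Kst *m x)))
        (bf Pst ((A - B *m Kst - C *m L) *m x) ((A - B *m Kst - C *m L) *m x))) (bf Pst x x)) ->
  in_Omega Q Rv zeta L -> is_Pstar A B C Q Ru Rv L P ->
  forall x, Rle (bf P x x) (bf Pst x x).
Proof.
move=> hz hzp hR hPst hp hstar hOm hP x.
pose F := fun z : 'cV[R]_d => (A - C *m L - B *m Kst) *m z.
have eF : A - B *m Kst - C *m L = A - C *m L - B *m Kst by rewrite addrAC.
have star : forall z, Rle (Rplus (Rplus (Rminus (bf Q z z) (bf Rv (L *m z) (L *m z))) (bf Ru (Kst *m z) (Kst *m z)))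
        (bf Pst (F z) (F z))) (bf Pst z z).
  by move=> z; have := hstar L z; rewrite eF.
have om := omega_q hOm.
have Rnn : forall z, Rle R0 (bf Ru (Kst *m z) (Kst *m z)) by move=> z; apply: (proj2 (posdef_psdq hR)).
have dec : forall z, Rle (bf Pst (F z) (F z)) (Rminus (bf Pst z z) (Rmult zeta (dot z z))).
  move=> z; have := star z; have := om z; have := Rnn z; lra.
have mono : forall z, Rle ((fun y => Rminus (bf P y y) (bf Pst y y)) z) ((fun y => Rminus (bf P y y) (bf Pst y y)) (F z)).
  move=> z /=; have := star z; have := pstar_le Kst z hR hP; rewrite -/(F z); lra.
have [c [hc0 hc]] := q_bound P.
have hdec := decay hz hzp dec hp (proj2 hPst) (@dot_ge0 d).
suff : Rle (Rminus (bf P x x) (bf Pst x x)) R0 by lra.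
apply: (limit_arg (nn := fun z => dot z z) hc0 (hdec x)) => t.
have := iter_mono mono x t => /= h.
have := hc (iter t F x); have := proj2 hPst (iter t F x).
move: h; set y := iter t F x => h h1 h2.
have := Rle_abs (bf P y y); lra.
Qed.

Lemma lip_one zeta p cQ rv cC (L L' : 'M[R]_(m2,d)) (P P' : 'M[R]_d) :
  Rlt R0 zeta -> Rle zeta p -> Rle R0 cQ -> Rle R0 rv -> Rle R0 cC ->
  posdef Ru -> posdef Rv ->
  (forall z, Rle (bf Q z z) (Rmult cQ (dot z z))) ->
  (forall z, Rle (bf Rv z z) (Rmult rv (dot z z))) ->
  (forall z, Rle (dot (C *m z) (C *m z)) (Rmult cC (dot z z))) ->
  (forall z, Rle (bf P z z) (Rmult p (dot z z))) ->
  (forall z, Rle (bf P' z z) (Rmult p (dot z z))) ->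
  in_Omega Q Rv zeta L -> in_Omega Q Rv zeta L' ->
  is_Pstar A B C Q Ru Rv L P -> is_Pstar A B C Q Ru Rv L' P' ->
  Rle (spec_norm (L' - L)) R1 ->
  Rle (Rmult (c2f p cC) (spec_norm (L' - L))) (Rdiv zeta 2) ->
  forall x, Rle (Rminus (bf P' x x) (bf P x x))
    (Rmult (Rmult (Rdiv (Rmult 2 (Rmult (c3f cQ rv p cC) p)) zeta) (spec_norm (L' - L))) (dot x x)).
Proof.
move=> hz hzp hcQ hrv hcC hR hRv bQ bRv bC bP bP' hOm hOm' hP hP' hd1 hd2 x.
set de := spec_norm (L' - L).
have hde : Rle R0 de := spec_ge0 _.
change (spec_norm (L' - L)) with de in hd1.
change (spec_norm (L' - L)) with de in hd2.
set K := K_of A B C Ru L P.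
set Dl := L' - L.
pose Acl := fun z : 'cV[R]_d => (A - C *m L - B *m K) *m z.
pose F := fun z : 'cV[R]_d => (A - C *m L' - B *m K) *m z.
have eF : forall z, F z = Acl z - C *m (Dl *m z).
  move=> z; rewrite /F /Acl mulmxA -mulmxBl; congr (_ *m _).
  rewrite /Dl mulmxBr; move: (C *m L') (C *m L) (B *m K) => u v w.
  by rewrite opprB addrA [A - v - w + v]addrAC subrK addrAC.
have f1 : forall z, bf P z z = Rplus (Rplus (Rminus (bf Q z z) (bf Rv (L *m z) (L *m z))) (bf Ru (K *m z) (K *m z))) (bf P (Acl z) (Acl z)).
  by move=> z; apply: pstar_eq.
have f2 : forall z, Rle (bf P' z z) (Rplus (Rplus (Rminus (bf Q z z) (bf Rv (L' *m z) (L' *m z))) (bf Ru (K *m z) (K *m z))) (bf P' (F z) (F z))).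
  by move=> z; apply: pstar_le.
have om := omega_q hOm.
have [hPs hPq] := posdef_psdq (proj1 hP).
have [hP's hP'q] := posdef_psdq (proj1 hP').
have [hRvs hRvq] := posdef_psdq hRv.
have Rnn : forall z, Rle R0 (bf Ru (K *m z) (K *m z)) by move=> z; apply: (proj2 (posdef_psdq hR)).
have Nnn := @dot_ge0 d.
have lyap : forall z, Rle (bf P (Acl z) (Acl z)) (Rminus (bf P z z) (Rmult zeta (dot z z))).
  move=> z; have := f1 z; have := om z; have := Rnn z; lra.
have hDl : forall z, Rle (dot (Dl *m z) (Dl *m z)) (Rmult (Rmult de de) (dot z z)) by move=> z; apply: spec_S2.
have hRvpart : forall z, Rle (Rminus (bf Rv (L *m z) (L *m z)) (bf Rv (L' *m z) (L' *m z)))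
    (Rmult (Rmult (Rmult 2 (Rplus cQ rv)) de) (dot z z)).
  move=> z.
  have hL' : L' *m z = L *m z + Dl *m z by rewrite /Dl mulmxBl addrC subrK.
  rewrite hL' qD //.
  have hcs := CS_bf (L *m z) (Dl *m z) (posdef_psdq hRv).
  have hX : Rle (bf Rv (L *m z) (L *m z)) (Rmult cQ (dot z z)).
    have := om z; have := bQ z; have := Nnn z; have : Rle R0 (Rmult zeta (dot z z)) by apply: Rmult_le_pos; [lra|apply: Nnn].
    lra.
  have hY : Rle (bf Rv (Dl *m z) (Dl *m z)) (Rmult (Rmult rv (Rmult de de)) (dot z z)).
    apply: Rle_trans (bRv _) _; rewrite Rmult_assoc; apply: Rmult_le_compat_l => //.
  have := prod_bound (hRvq _) hX (hRvq _) hY hcQ hrv hde (Nnn z) hcs.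
  have := Rle_abs (bf Rv (L *m z) (Dl *m z)); have := Rabs_Ropp (bf Rv (L *m z) (Dl *m z)).
  have := Rle_abs (Ropp (bf Rv (L *m z) (Dl *m z))).
  have := hRvq (Dl *m z).
  move=> *; lra.
have hp0 : Rle R0 p by lra.
have hpC : Rle R0 (Rmult p cC) by apply: Rmult_le_pos.
have hdd : Rle (Rmult de de) de.
  have := Rmult_le_compat_l de _ _ hde hd1; rewrite Rmult_1_r //.
have hPpart : forall z, Rle (Rminus (bf P (F z) (F z)) (bf P (Acl z) (Acl z)))
    (Rmult (Rmult (c2f p cC) de) (dot z z)).
  move=> z; rewrite eF qB //.
  set cd := C *m (Dl *m z).
  have hcs := CS_bf (Acl z) cd (posdef_psdq (proj1 hP)).
  have hX : Rle (bf P (Acl z) (Acl z)) (Rmult p (dot z z)).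
    have := lyap z; have := bP z; have : Rle R0 (Rmult zeta (dot z z)) by apply: Rmult_le_pos; [lra|apply: Nnn].
    lra.
  have hcd : Rle (dot cd cd) (Rmult (Rmult cC (Rmult de de)) (dot z z)).
    apply: Rle_trans (bC _) _; rewrite Rmult_assoc; apply: Rmult_le_compat_l => //.
  have hY : Rle (bf P cd cd) (Rmult (Rmult (Rmult p cC) (Rmult de de)) (dot z z)).
    apply: Rle_trans (bP _) _.
    have := Rmult_le_compat_l p _ _ hp0 hcd.
    have -> : Rmult p (Rmult (Rmult cC (Rmult de de)) (dot z z)) = Rmult (Rmult (Rmult p cC) (Rmult de de)) (dot z z) by ring.
    done.
  have := prod_bound (hPq _) hX (hPq _) hY hp0 hpC hde (Nnn z) hcs.
  have hdN : Rle (Rmult (Rmult (Rmult p cC) (Rmult de de)) (dot z z)) (Rmult (Rmult (Rmult p cC) de) (dot z z)).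
    apply: Rmult_le_compat_r; first exact: Nnn.
    by apply: Rmult_le_compat_l.
  have := Rle_abs (Ropp (bf P (Acl z) cd)); rewrite Rabs_Ropp.
  rewrite /c2f; move=> *; lra.
set c2 := c2f p cC in hd2 hPpart.
set c3 := c3f cQ rv p cC.
have c3E : c3 = Rplus (Rmult 2 (Rplus cQ rv)) c2 by [].
set kap := Rdiv (Rmult (Rmult 2 c3) de) zeta.
have hc2 : Rle R0 c2 by rewrite /c2 /c2f; apply: Rplus_le_le_0_compat; [apply: Rmult_le_pos; lra|done].
have hc3 : Rle R0 c3 by rewrite c3E; apply: Rplus_le_le_0_compat => //; apply: Rmult_le_pos; lra.
have hkap0 : Rle R0 kap.
  rewrite /kap /Rdiv; apply: Rmult_le_pos; last by apply: Rlt_le; apply: Rinv_0_lt_compat.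
  apply: Rmult_le_pos => //; apply: Rmult_le_pos => //; lra.
have hkapE : forall N, Rmult kap (Rmult (Rdiv zeta 2) N) = Rmult (Rmult c3 de) N.
  by move=> N; rewrite /kap; field; lra.
have dec : forall z, Rle (bf P (F z) (F z)) (Rminus (bf P z z) (Rmult (Rdiv zeta 2) (dot z z))).
  move=> z; have := hPpart z; have := lyap z.
  have := Rmult_le_compat_r (dot z z) _ _ (Nnn z) hd2.
  move=> *; lra.
pose g := fun z => Rminus (Rminus (bf P' z z) (bf P z z)) (Rmult kap (bf P z z)).
have mono : forall z, Rle (g z) (g (F z)).
  move=> z; rewrite /g.
  have := f1 z; have := f2 z; have := hRvpart z; have := hPpart z.
  have := Rmult_le_compat_l kap _ _ hkap0 (ltac:(have := dec z; lra) : Rle (Rmult (Rdiv zeta 2) (dot z z)) (Rminus (bf P z z) (bf P (F z) (F z)))).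
  rewrite hkapE.
  have e3 : Rmult (Rmult c3 de) (dot z z) = Rplus (Rmult (Rmult (Rmult 2 (Rplus cQ rv)) de) (dot z z)) (Rmult (Rmult c2 de) (dot z z)) by rewrite c3E; ring.
  rewrite e3.
  move=> *; lra.
have hz2 : Rlt R0 (Rdiv zeta 2) by lra.
have hdec := decay hz2 (ltac:(lra) : Rle (Rdiv zeta 2) p) dec bP hPq Nnn.
have hg : Rle (g x) R0.
  apply: (limit_arg (nn := fun z => dot z z) hp0 (hdec x)) => t.
  have := iter_mono mono x t; rewrite /g.
  set y := iter t F x => h.
  have := bP' y; have := hPq y; have := Rmult_le_pos _ _ hkap0 (hPq y).
  move=> *; lra.
have hfin : Rle (Rmult kap (bf P x x)) (Rmult kap (Rmult p (dot x x))) by apply: Rmult_le_compat_l.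
have eq : Rmult (Rmult (Rdiv (Rmult 2 (Rmult c3 p)) zeta) de) (dot x x) = Rmult kap (Rmult p (dot x x)).
  by rewrite /kap; field; lra.
rewrite eq; move: hg; rewrite /g; lra.
Qed.
End Game.

Unset Implicit Arguments.
Theorem mainTheorem16 (d m1 m2 : nat)
    (A : 'M[R]_d) (B : 'M[R]_(d, m1)) (C : 'M[R]_(d, m2))
    (Q : 'M[R]_d) (Ru : 'M[R]_m1) (Rv : 'M[R]_m2) (Sigma0 : 'M[R]_d)
    (Pst : 'M[R]_d) (zeta : R) :
  posdef Q -> posdef Ru -> posdef Rv -> posdef Sigma0 ->
  (* standing assumption (i) *)
  minimal_pd_GARE_sol A B C Q Ru Rv Pst ->
  posdef (Rv - C^T *m Pst *m C) ->
  (* standing assumption (ii) *)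
  posdef (Q - (Lstar A B C Ru Rv Pst)^T *m Rv *m Lstar A B C Ru Rv Pst) ->
  Rlt R0 zeta ->
  Rlt zeta (sigma_min (Q - (Lstar A B C Ru Rv Pst)^T *m Rv *m Lstar A B C Ru Rv Pst)) ->
  exists BL BP : R, Rlt R0 BL /\ Rlt R0 BP /\
    forall (L L' : 'M[R]_(m2, d)) (P P' : 'M[R]_d),
      in_Omega Q Rv zeta L -> in_Omega Q Rv zeta L' ->
      Rle (spec_norm (L' - L)) BL ->
      is_Pstar A B C Q Ru Rv L P -> is_Pstar A B C Q Ru Rv L' P' ->
      Rle (spec_norm (P' - P)) (Rmult BP (spec_norm (L' - L))).
Proof.
move=> hQ hRu hRv _ [hPst [hsol _]] hW _ hz _.
have [Kst hstar] := gare_star (proj1 hPst) (proj1 hRv) hsol (posdef_psdq hW).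
have hPstq := posdef_psdq hPst.
have [p0 [hp00 hp0]] := q_bound Pst.
have [cQ [hcQ0 hcQ]] := q_bound Q.
have [rv [hrv0 hrv]] := q_bound Rv.
have [cC [hcC0 hcC]] := mx_bound C.
set p := Rplus p0 zeta.
have hzp : Rle zeta p by rewrite /p; lra.
have hp : Rlt R0 p by lra.
have bPst : forall z, Rle (bf Pst z z) (Rmult p (dot z z)).
  move=> z; have := hp0 z; have := Rle_abs (bf Pst z z); have := dot_ge0 z.
  rewrite /p => *; nra.
have bQ : forall z, Rle (bf Q z z) (Rmult cQ (dot z z)).
  by move=> z; apply: Rle_trans (Rle_abs _) (hcQ z).
have bRv : forall z, Rle (bf Rv z z) (Rmult rv (dot z z)).
  by move=> z; apply: Rle_trans (Rle_abs _) (hrv z).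
set c2 := c2f p cC.
set c3 := c3f cQ rv p cC.
have hc2 : Rle (Rmult 2 p) c2.
  rewrite /c2 /c2f; have : Rle R0 (Rmult p cC) by apply: Rmult_le_pos; lra.
  lra.
have hc3 : Rlt R0 c3.
  rewrite /c3 /c3f -/c2; have : Rle R0 (Rplus cQ rv) by lra.
  lra.
exists (Rmin 1 (Rdiv zeta (Rmult 2 c2))), (Rdiv (Rmult 2 (Rmult c3 p)) zeta).
split; first by apply: Rmin_glb_lt; [lra | apply: Rdiv_lt_0_compat; lra].
split; first by apply: Rdiv_lt_0_compat => //; apply: Rmult_lt_0_compat; [lra|apply: Rmult_lt_0_compat].
move=> L L' P P' hO hO' hd hP hP'.
have bP : forall z, Rle (bf P z z) (Rmult p (dot z z)).
  move=> z; apply: Rle_trans (bPst z).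
  exact: (P_le_Pstar hz hzp hRu hPstq bPst hstar hO hP).
have bP' : forall z, Rle (bf P' z z) (Rmult p (dot z z)).
  move=> z; apply: Rle_trans (bPst z).
  exact: (P_le_Pstar hz hzp hRu hPstq bPst hstar hO' hP').
set de := spec_norm (L' - L) in hd *.
have hde0 : Rle R0 de := spec_ge0 _.
have hd1 : Rle de R1 := Rle_trans _ _ _ hd (Rmin_l _ _).
have hd2 : Rle (Rmult c2 de) (Rdiv zeta 2).
  have h := Rle_trans _ _ _ hd (Rmin_r _ _).
  have hc2p : Rlt R0 c2 by lra.
  have := Rmult_le_compat_l c2 _ _ (Rlt_le _ _ hc2p) h.
  have -> : Rmult c2 (Rdiv zeta (Rmult 2 c2)) = Rdiv zeta 2 by field; lra.
  done.
have deE : spec_norm (L - L') = de by rewrite -opprB spec_opp.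
have h1 := lip_one hz hzp hcQ0 hrv0 hcC0 hRu hRv bQ bRv hcC bP bP' hO hO' hP hP' hd1 hd2.
have h2 := lip_one hz hzp hcQ0 hrv0 hcC0 hRu hRv bQ bRv hcC bP' bP hO' hO hP' hP
   (ltac:(rewrite deE; exact hd1)) (ltac:(rewrite deE; exact hd2)).
rewrite deE in h2.
set BP := Rdiv (Rmult 2 (Rmult c3 p)) zeta in h1 h2 *.
have hBP : Rle R0 BP by rewrite /BP; apply: Rlt_le; apply: Rdiv_lt_0_compat => //; apply: Rmult_lt_0_compat; [lra|apply: Rmult_lt_0_compat].
apply: spec_S3; first by apply: Rmult_le_pos.
apply: polar.
- have [h _] := posdef_psdq (proj1 hP); have [h' _] := posdef_psdq (proj1 hP').
  by rewrite linearB /= h h'.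
- by apply: Rmult_le_pos.
- move=> y; rewrite bfB; have := h1 y; have := h2 y.
  change (spec_norm (L' - L)) with de; lra.
Qed.
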